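(* Let $k=1$, $\gamma>0$, $\delta>1$, and $Z=\{(\tau,s)\in\mathcal C:g(\tau,s)=0\}$. (a) If $1<\delta<\Phi$ and $\gamma>M_{\mathcal F}(\delta)/2$, then $Z\cap(\{\tau\}\times S^1)$ has exactly two points for every $\tau\in(0,1)$ and is the single point $(1,3\pi/2)$ for $\tau=1$; moreover all points of $Z\cap(\{\tau\}\times S^1)$ converge to $s=3\pi/2$ as $\tau\to0^+$ (so $Z$ closes up to a contractible closed curve with ''fold points'' at $\tau=0$ and $\tau=1$). (b) If $1<\delta<\Phi$ and $0<\gamma<M_{\mathcal F}(\delta)/2$, then there are $0<a<b<1$ such that $Z\cap(\{\tau\}\times S^1)$ has exactly two points for $\tau\in(0,a)\cup(b,1)$, is the single point $(\tau,\pi/2)$ for $\tau\in\{a,b\}$, is empty for $\tau\in(a,b)$, and is the single point $(1,3\pi/2)$ for $\tau=1$; $(a,\pi/2)$ is a subcritical and $(b,\pi/2)$ a supercritical fold point, and the points of $Z\cap(\{\tau\}\times S^1)$ converge to $s=3\pi/2$ as $\tau\to0^+$. (c) If $\delta>\Phi$, then there is $\tau_0\in(0,1)$ such that $Z\cap(\{\tau\}\times S^1)$ is empty for $\tau<\tau_0$, is the single point $(\tau_0,\pi/2)$ for $\tau=\tau_0$, has exactly two points for $\tau\in(\tau_0,1)$, and is the single point $(1,3\pi/2)$ for $\tau=1$; $(\tau_0,\pi/2)$ is a supercritical fold point and $(1,3\pi/2)$ is a fold point.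
   Context: Let $S^1=\mathbb R/2\pi\mathbb Z$ and $\mathcal C=\{(\tau,s):0<\tau\le1,\ s\in S^1\}$. Let $p(\delta)=-\delta^2+\delta+1$, $\Phi=(1+\sqrt5)/2$. For parameters $\delta>1$, $\gamma>0$, $k>0$ define $g:\mathcal C\to\mathbb R$, $g(\tau,s)=\tau^{\delta^2}+\gamma\tau^{\delta^2-\delta}(1+k\sin s)-\tau$; thus $g(\tau,s)=0$ iff $\gamma(1+k\sin s)=\mathcal F_\delta(\tau)$, where $\mathcal F_\delta(\tau)=\tau^{p(\delta)}-\tau^\delta$. For $1<\delta<\Phi$, $M_{\mathcal F}(\delta)=\max_{(0,1]}\mathcal F_\delta>0$. A fold point is a point $(\tau_0,s_0)\in\mathcal C$ with $g(\tau_0,s_0)=0$ and $\partial g/\partial s(\tau_0,s_0)=0$. It is supercritical if there is a neighbourhood $U$ of $(\tau_0,s_0)$ such that for $\tau>\tau_0$ close to $\tau_0$ the set $\{s:(\tau,s)\in U,\ g(\tau,s)=0\}$ has exactly two elements, for $\tau=\tau_0$ exactly one, and for $\tau<\tau_0$ close to $\tau_0$ none; subcritical if the same holds with the roles of $\tau>\tau_0$ and $\tau<\tau_0$ interchanged. *)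

(* Defs.v *)
From Stdlib Require Import Reals Lra.
Open Scope R_scope.

Definition pdelta (d : R) : R := - d ^ 2 + d + 1.
Definition Phi : R := (1 + sqrt 5) / 2.

Definition Fdelta (d tau : R) : R := Rpower tau (pdelta d) - Rpower tau d.

Definition is_max_F (d M : R) : Prop :=
  (exists t, 0 < t <= 1 /\ Fdelta d t = M) /\
  (forall t, 0 < t <= 1 -> Fdelta d t <= M).

(* g(tau,s) = tau^{delta^2} + gamma tau^{delta^2-delta} (1 + k sin s) - tau,
   with s a real representative of a point of S^1 = R/2piZ *)
Definition gfun (d gam k tau s : R) : R :=
  Rpower tau (d ^ 2) + gam * Rpower tau (d ^ 2 - d) * (1 + k * sin s) - tau.

Definition is_empty (P : R -> Prop) : Prop := forall s, ~ P s.
Definition is_single (P : R -> Prop) (a : R) : Prop := forall s, P s <-> s = a.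
Definition has_one (P : R -> Prop) : Prop := exists a, is_single P a.
Definition has_two (P : R -> Prop) : Prop :=
  exists a b, a <> b /\ forall s, P s <-> (s = a \/ s = b).

(* The slice Z ∩ ({tau} × S^1), points of S^1 represented in [0, 2pi) *)
Definition slice (g : R -> R -> R) (tau : R) : R -> Prop :=
  fun s => 0 <= s < 2 * PI /\ g tau s = 0.

Definition fold_point (g : R -> R -> R) (tau0 s0 : R) : Prop :=
  0 < tau0 <= 1 /\ g tau0 s0 = 0 /\ derivable_pt_lim (fun s => g tau0 s) s0 0.

(* A neighbourhood of (tau0,s0) in the cylinder C, expressed in the chart
   [s0 - pi, s0 + pi) of S^1 (which is bijective onto S^1): a subset of
   C (in this chart) containing an open box around (tau0, s0). *)
Definition cyl_nbhd (tau0 s0 : R) (U : R -> R -> Prop) : Prop :=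
  (forall tau s, U tau s -> 0 < tau <= 1 /\ s0 - PI <= s < s0 + PI) /\
  (exists r, 0 < r /\ forall tau s, 0 < tau <= 1 -> Rabs (tau - tau0) < r ->
        Rabs (s - s0) < r -> U tau s).

Definition zeros_in (g : R -> R -> R) (U : R -> R -> Prop) (tau : R) : R -> Prop :=
  fun s => U tau s /\ g tau s = 0.

Definition supercritical (g : R -> R -> R) (tau0 s0 : R) : Prop :=
  fold_point g tau0 s0 /\
  exists U, cyl_nbhd tau0 s0 U /\ exists eta, 0 < eta /\
    (forall tau, tau0 < tau < tau0 + eta -> has_two (zeros_in g U tau)) /\
    has_one (zeros_in g U tau0) /\
    (forall tau, tau0 - eta < tau < tau0 -> is_empty (zeros_in g U tau)).

Definition subcritical (g : R -> R -> R) (tau0 s0 : R) : Prop :=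
  fold_point g tau0 s0 /\
  exists U, cyl_nbhd tau0 s0 U /\ exists eta, 0 < eta /\
    (forall tau, tau0 - eta < tau < tau0 -> has_two (zeros_in g U tau)) /\
    has_one (zeros_in g U tau0) /\
    (forall tau, tau0 < tau < tau0 + eta -> is_empty (zeros_in g U tau)).

Definition slices_converge_3pi2 (g : R -> R -> R) : Prop :=
  forall eps, 0 < eps -> exists eta, 0 < eta /\
    forall tau s, 0 < tau < eta -> slice g tau s -> Rabs (s - 3 * PI / 2) < eps.

(* Main.v *)
Require Import Defs.
From Stdlib Require Import Reals Lra.
From Coquelicot Require Import Coquelicot.
Open Scope R_scope.

Definition Sc (c : R) : R -> Prop := fun s => 0 <= s < 2 * PI /\ sin s = c.

Lemma sin_shift2 x : sin (x + 2 * PI) = sin x.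
Proof. rewrite <- (sin_period x 1). f_equal. simpl; ring. Qed.

Lemma sin_cases s : 0 <= s < 2 * PI ->
  s = asin (sin s) \/ s = PI - asin (sin s) \/ s = asin (sin s) + 2 * PI.
Proof.
  intros [h1 h2]. pose proof PI_RGT_0.
  destruct (Rle_lt_dec s (PI/2)).
  - left. rewrite asin_sin; lra.
  - destruct (Rle_lt_dec s (3*(PI/2))).
    + right; left. rewrite <- sin_PI_x. rewrite asin_sin; lra.
    + right; right. replace (sin s) with (sin (s - 2*PI)).
      * rewrite asin_sin; lra.
      * rewrite <- sin_shift2. f_equal; ring.
Qed.

Lemma asin_strict c : -1 < c < 1 -> - (PI/2) < asin c < PI/2.
Proof.
  intros hc. pose proof (asin_bound c). pose proof (sin_asin c).
  split; destruct H as [h1 h2].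
  - destruct h1 as [h1|h1]; auto. exfalso.
    assert (sin (asin c) = -1). { rewrite <- h1, sin_neg, sin_PI2; ring. }
    rewrite H0 in H; lra.
  - destruct h2 as [h2|h2]; auto. exfalso.
    assert (sin (asin c) = 1). { rewrite h2, sin_PI2; ring. }
    rewrite H0 in H; lra.
Qed.

Lemma Sc_two c : -1 < c < 1 -> has_two (Sc c).
Proof.
  intros hc. pose proof (asin_strict c hc) as ha. pose proof PI_RGT_0.
  assert (hs : sin (asin c) = c) by (apply sin_asin; lra).
  set (a := asin c) in *.
  destruct (Rle_lt_dec 0 a).
  - exists a, (PI - a). split; [lra|]. intros s; split.
    + intros [hr hsin]. destruct (sin_cases s hr) as [e|[e|e]]; rewrite hsin in e; fold a in e; lra.
    + intros [e|e]; subst s; split; try lra. rewrite sin_PI_x; auto.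
  - exists (PI - a), (a + 2*PI). split; [lra|]. intros s; split.
    + intros [hr hsin]. destruct (sin_cases s hr) as [e|[e|e]]; rewrite hsin in e; fold a in e; lra.
    + intros [e|e]; subst s; split; try lra. rewrite sin_PI_x; auto. rewrite sin_shift2; auto.
Qed.

Lemma Sc_one : is_single (Sc 1) (PI/2).
Proof.
  pose proof PI_RGT_0. intros s; split.
  - intros [hr hsin]. assert (asin 1 = PI/2) by (rewrite <- sin_PI2, asin_sin; lra).
    destruct (sin_cases s hr) as [e|[e|e]]; rewrite hsin, H0 in e; lra.
  - intros ->. split; [lra| apply sin_PI2].
Qed.

Lemma Sc_mone : is_single (Sc (-1)) (3 * PI/2).
Proof.
  pose proof PI_RGT_0. assert (asin (-1) = - (PI/2)).
  { replace (-1) with (sin (- (PI/2))) by (rewrite sin_neg, sin_PI2; ring). rewrite asin_sin; lra. }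
  intros s; split.
  - intros [hr hsin]. destruct (sin_cases s hr) as [e|[e|e]]; rewrite hsin, H0 in e; lra.
  - intros ->. split; [lra|]. replace (3*PI/2) with (PI - - (PI/2)) by field.
    rewrite sin_PI_x, sin_neg, sin_PI2; ring.
Qed.

Lemma Sc_empty c : 1 < c -> is_empty (Sc c).
Proof. intros hc s [_ h]. pose proof (SIN_bound s); lra. Qed.

Lemma Sc_pos c s : 0 < c -> Sc c s -> 0 < s < PI.
Proof.
  intros hc [[h1 h2] h]. pose proof PI_RGT_0.
  destruct (Rle_lt_dec s 0). { assert (e: s = 0) by lra; rewrite e, sin_0 in h; lra. }
  destruct (Rlt_le_dec s PI). lra.
  destruct r0. pose proof (sin_lt_0 s H0 h2); lra.
  rewrite <- H0, sin_PI in h; lra.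
Qed.

Lemma Rpower_pos x y : 0 < Rpower x y.
Proof. unfold Rpower; apply exp_pos. Qed.

Lemma g_eq d gam tau s : 0 < tau ->
  gfun d gam 1 tau s = Rpower tau (d^2 - d) * (gam * (1 + sin s) - Fdelta d tau).
Proof.
  intros ht. unfold gfun, Fdelta.
  replace (Rpower tau (d^2)) with (Rpower tau (d^2 - d) * Rpower tau d)
    by (rewrite <- Rpower_plus; f_equal; ring).
  assert (E : Rpower tau (d^2 - d) * Rpower tau (pdelta d) = tau).
  { rewrite <- Rpower_plus. unfold pdelta. replace (d ^ 2 - d + (- d ^ 2 + d + 1)) with 1 by ring.
    apply Rpower_1; auto. }
  transitivity (Rpower tau (d ^ 2 - d) * Rpower tau d +
    gam * Rpower tau (d ^ 2 - d) * (1 + 1 * sin s) - Rpower tau (d^2 - d) * Rpower tau (pdelta d)).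
  - rewrite E; reflexivity.
  - ring.
Qed.

Lemma slice_iff d gam tau : 0 < gam -> 0 < tau -> forall s,
  slice (gfun d gam 1) tau s <-> Sc (Fdelta d tau / gam - 1) s.
Proof.
  intros hg ht s. unfold slice, Sc. rewrite g_eq by auto.
  pose proof (Rpower_pos tau (d^2-d)).
  split; intros [h1 h2]; split; auto.
  - apply Rmult_integral in h2. destruct h2; [lra|]. field_simplify; [|lra].
    apply (Rmult_eq_reg_l gam); [|lra]. field_simplify; lra.
  - rewrite h2. field_simplify; lra.
Qed.

Lemma two_tr (P Q : R -> Prop) : (forall s, P s <-> Q s) -> has_two Q -> has_two P.
Proof. intros h [a [b [hab hq]]]. exists a, b; split; auto. intro s; rewrite h; auto. Qed.
Lemma single_tr (P Q : R -> Prop) a : (forall s, P s <-> Q s) -> is_single Q a -> is_single P a.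
Proof. intros h hq s. rewrite h; auto. Qed.
Lemma empty_tr (P Q : R -> Prop) : (forall s, P s -> Q s) -> is_empty Q -> is_empty P.
Proof. intros h hq s hp. apply (hq s); auto. Qed.

Lemma div_lt_iff x y gam : 0 < gam -> (x / gam < y <-> x < y * gam).
Proof. intros h. split; intro H.
  - apply (Rmult_lt_compat_r gam) in H; auto. unfold Rdiv in H. rewrite Rmult_assoc, Rinv_l in H; lra.
  - apply (Rmult_lt_reg_r gam); auto. unfold Rdiv. rewrite Rmult_assoc, Rinv_l; lra. Qed.
Lemma div_gt_iff x y gam : 0 < gam -> (y < x / gam <-> y * gam < x).
Proof. intros h. split; intro H.
  - apply (Rmult_lt_compat_r gam) in H; auto. unfold Rdiv in H. rewrite Rmult_assoc, Rinv_l in H; lra.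
  - apply (Rmult_lt_reg_r gam); auto. unfold Rdiv. rewrite Rmult_assoc, Rinv_l; lra. Qed.

Section G.
Variables d gam : R.
Hypothesis hg : 0 < gam.
Let F := Fdelta d.
Let g := gfun d gam 1.

Lemma slice_two tau : 0 < tau -> 0 < F tau < 2 * gam -> has_two (slice g tau).
Proof.
  intros ht hF. eapply two_tr. apply slice_iff; auto. apply Sc_two.
  split; [assert (0 < F tau / gam) by (apply div_gt_iff; lra)|assert (F tau / gam < 2) by (apply div_lt_iff; lra)]; unfold F in *; lra.
Qed.

Lemma slice_top tau : 0 < tau -> F tau = 2 * gam -> is_single (slice g tau) (PI/2).
Proof.
  intros ht hF. eapply single_tr. apply slice_iff; auto.
  replace (Fdelta d tau / gam - 1) with 1. apply Sc_one. unfold F in hF; rewrite hF; field; lra.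
Qed.

Lemma slice_empty tau : 0 < tau -> 2 * gam < F tau -> is_empty (slice g tau).
Proof.
  intros ht hF. eapply empty_tr. intro s; apply slice_iff; auto.
  apply Sc_empty. assert (2 < F tau / gam) by (apply div_gt_iff; lra). unfold F in *; lra.
Qed.

Lemma F1 : F 1 = 0.
Proof. unfold F, Fdelta, Rpower. rewrite ln_1, !Rmult_0_r; ring. Qed.

Lemma slice_one : is_single (slice g 1) (3*PI/2).
Proof.
  eapply single_tr. apply slice_iff; auto; lra.
  replace (Fdelta d 1 / gam - 1) with (-1). apply Sc_mone. fold F; rewrite F1; field; lra.
Qed.

End G.

Lemma cont_ed f x : continuity_pt f x -> forall eps, 0 < eps ->
  exists del, 0 < del /\ forall y, Rabs (y - x) < del -> Rabs (f y - f x) < eps.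
Proof.
  unfold continuity_pt, continue_in, limit1_in, limit_in. intros H eps he.
  destruct (H eps he) as [a [ha h]]. exists a; split; auto. intros y hy.
  destruct (Req_dec y x) as [->|n].
  - rewrite Rminus_eq_0, Rabs_R0; auto.
  - apply (h y). split; [split; [exact I| auto] | simpl; unfold R_dist; auto].
Qed.

Lemma g_deriv d gam tau x :
  derivable_pt_lim (fun s => gfun d gam 1 tau s) x (gam * Rpower tau (d^2 - d) * cos x).
Proof.
  apply is_derive_Reals. unfold gfun. auto_derive; auto. replace (d * (d * 1) - d) with (d^2 - d) by ring. ring.
Qed.

Definition U0 : R -> R -> Prop := fun tau s => (0 < tau <= 1) /\ Rabs (s - PI/2) < PI/2.

Lemma cyl_U0 tau0 : cyl_nbhd tau0 (PI/2) U0.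
Proof.
  pose proof PI_RGT_0. split.
  - intros tau s [h1 h2]. split; auto. apply Rabs_def2 in h2. lra.
  - exists (PI/2). split; [lra|]. intros tau s h1 _ h2. split; auto.
Qed.

Section G.
Variables d gam : R.
Hypothesis hg : 0 < gam.
Let F := Fdelta d.
Let g := gfun d gam 1.

Lemma zeros_sub tau s : zeros_in g U0 tau s -> slice g tau s.
Proof.
  intros [[h1 h2] h3]. apply Rabs_def2 in h2. split; auto. pose proof PI_RGT_0; lra.
Qed.

Lemma zeros_sup tau s : 0 < tau <= 1 -> gam < F tau -> slice g tau s -> zeros_in g U0 tau s.
Proof.
  intros ht hF hs. split; [|apply hs]. split; auto.
  apply slice_iff in hs; auto; try lra.
  apply Sc_pos in hs. apply Rabs_def1; lra.
  assert (1 < F tau / gam) by (apply div_gt_iff; lra). unfold F in *; lra.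
Qed.

Lemma zeros_two tau : 0 < tau <= 1 -> gam < F tau < 2 * gam -> has_two (zeros_in g U0 tau).
Proof.
  intros ht hF. eapply two_tr; [|apply (slice_two d gam hg tau); [lra|unfold F in *; lra]].
  intro s; split; [apply zeros_sub| apply zeros_sup; auto; lra].
Qed.

Lemma zeros_one tau : 0 < tau <= 1 -> F tau = 2 * gam -> has_one (zeros_in g U0 tau).
Proof.
  intros ht hF. exists (PI/2). eapply single_tr; [|apply (slice_top d gam hg tau); [lra|auto]].
  intro s; split; [apply zeros_sub| apply zeros_sup; auto; lra].
Qed.

Lemma zeros_empty tau : 0 < tau -> 2 * gam < F tau -> is_empty (zeros_in g U0 tau).
Proof.
  intros ht hF. eapply empty_tr; [apply zeros_sub|]. apply slice_empty; auto.
Qed.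

Lemma fold_gen tau0 s0 : 0 < tau0 <= 1 -> g tau0 s0 = 0 -> cos s0 = 0 -> fold_point g tau0 s0.
Proof.
  intros h1 h2 h3. split; auto. split; auto.
  pose proof (g_deriv d gam tau0 s0). rewrite h3, Rmult_0_r in H. exact H.
Qed.

Lemma top_zero tau : 0 < tau -> F tau = 2 * gam -> g tau (PI/2) = 0.
Proof.
  intros ht hF. apply (slice_top d gam hg tau ht hF). reflexivity.
Qed.

Lemma super_gen tau0 eta0 : 0 < tau0 < 1 -> F tau0 = 2 * gam -> 0 < eta0 ->
  (forall tau, tau0 < tau < tau0 + eta0 -> F tau < 2 * gam) ->
  (forall tau, tau0 - eta0 < tau < tau0 -> 2 * gam < F tau) ->
  continuity_pt F tau0 -> supercritical g tau0 (PI/2).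
Proof.
  intros ht hF he hr hl hc. split.
  { apply fold_gen; [lra| apply top_zero; [lra|auto]| apply cos_PI2]. }
  destruct (cont_ed _ _ hc gam hg) as [del [hd hdel]].
  exists U0; split; [apply cyl_U0|].
  exists (Rmin (Rmin eta0 del) (Rmin tau0 (1 - tau0))).
  pose proof (Rmin_l (Rmin eta0 del) (Rmin tau0 (1 - tau0))) as m1.
  pose proof (Rmin_r (Rmin eta0 del) (Rmin tau0 (1 - tau0))) as m2.
  pose proof (Rmin_l eta0 del) as m3. pose proof (Rmin_r eta0 del) as m4.
  pose proof (Rmin_l tau0 (1 - tau0)) as m5. pose proof (Rmin_r tau0 (1 - tau0)) as m6.
  set (e := Rmin (Rmin eta0 del) (Rmin tau0 (1 - tau0))) in *.
  split; [unfold e; repeat apply Rmin_pos; lra|]. split; [|split].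
  - intros tau htau. apply zeros_two; [lra|]. split; [|apply hr; lra].
    assert (Rabs (tau - tau0) < del) by (apply Rabs_def1; lra).
    specialize (hdel tau H). apply Rabs_def2 in hdel. fold F in hdel. lra.
  - apply zeros_one; auto; lra.
  - intros tau htau. apply zeros_empty; [lra|]. apply hl; lra.
Qed.

Lemma sub_gen tau0 eta0 : 0 < tau0 < 1 -> F tau0 = 2 * gam -> 0 < eta0 ->
  (forall tau, tau0 - eta0 < tau < tau0 -> F tau < 2 * gam) ->
  (forall tau, tau0 < tau < tau0 + eta0 -> 2 * gam < F tau) ->
  continuity_pt F tau0 -> subcritical g tau0 (PI/2).
Proof.
  intros ht hF he hl hr hc. split.
  { apply fold_gen; [lra| apply top_zero; [lra|auto]| apply cos_PI2]. }
  destruct (cont_ed _ _ hc gam hg) as [del [hd hdel]].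
  exists U0; split; [apply cyl_U0|].
  exists (Rmin (Rmin eta0 del) (Rmin tau0 (1 - tau0))).
  pose proof (Rmin_l (Rmin eta0 del) (Rmin tau0 (1 - tau0))) as m1.
  pose proof (Rmin_r (Rmin eta0 del) (Rmin tau0 (1 - tau0))) as m2.
  pose proof (Rmin_l eta0 del) as m3. pose proof (Rmin_r eta0 del) as m4.
  pose proof (Rmin_l tau0 (1 - tau0)) as m5. pose proof (Rmin_r tau0 (1 - tau0)) as m6.
  set (e := Rmin (Rmin eta0 del) (Rmin tau0 (1 - tau0))) in *.
  split; [unfold e; repeat apply Rmin_pos; lra|]. split; [|split].
  - intros tau htau. apply zeros_two; [lra|]. split; [|apply hl; lra].
    assert (Rabs (tau - tau0) < del) by (apply Rabs_def1; lra).
    specialize (hdel tau H). apply Rabs_def2 in hdel. fold F in hdel. lra.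
  - apply zeros_one; auto; lra.
  - intros tau htau. apply zeros_empty; [lra|]. apply hr; lra.
Qed.

End G.

Lemma sqrt5_facts : sqrt 5 * sqrt 5 = 5 /\ 0 < sqrt 5.
Proof. split. apply sqrt_sqrt; lra. apply sqrt_lt_R0; lra. Qed.

Lemma p_pos d : 1 < d -> d < Phi -> 0 < pdelta d.
Proof. intros h1 h2. unfold Phi in h2. unfold pdelta. destruct sqrt5_facts as [e p].
  assert ((d - (1 + sqrt 5)/2) * (d - (1 - sqrt 5)/2) < 0).
  { apply Rmult_neg_pos; [lra|lra]. }
  replace ((d - (1 + sqrt 5)/2) * (d - (1 - sqrt 5)/2)) with (d^2 - d + (1 - sqrt 5 * sqrt 5)/4) in H by (field).
  rewrite e in H. lra. Qed.

Lemma p_neg d : 1 < d -> Phi < d -> pdelta d < 0.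
Proof. intros h1 h2. unfold Phi in h2. unfold pdelta. destruct sqrt5_facts as [e p].
  assert (0 < (d - (1 + sqrt 5)/2) * (d - (1 - sqrt 5)/2)).
  { apply Rmult_lt_0_compat; lra. }
  replace ((d - (1 + sqrt 5)/2) * (d - (1 - sqrt 5)/2)) with (d^2 - d + (1 - sqrt 5 * sqrt 5)/4) in H by (field).
  rewrite e in H. lra. Qed.

Lemma p_lt_d d : 1 < d -> pdelta d < d.
Proof. intros h. unfold pdelta. nra. Qed.

Lemma ln_neg t : 0 < t < 1 -> ln t < 0.
Proof. intros h. rewrite <- ln_1. apply ln_increasing; lra. Qed.

Lemma Rpower_exp_lt t y z : 0 < t < 1 -> y < z -> Rpower t z < Rpower t y.
Proof. intros ht hyz. unfold Rpower. apply exp_increasing. pose proof (ln_neg t ht). nra. Qed.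

Lemma Rpower_base_lt x y q : 0 < x -> x < y -> 0 < q -> Rpower x q < Rpower y q.
Proof. intros h1 h2 h3. unfold Rpower. apply exp_increasing. pose proof (ln_increasing x y h1 h2). nra. Qed.

Lemma Rpower_base_lt_neg x y q : 0 < x -> x < y -> q < 0 -> Rpower y q < Rpower x q.
Proof. intros h1 h2 h3. unfold Rpower. apply exp_increasing. pose proof (ln_increasing x y h1 h2). nra. Qed.

Section F.
Variable d : R.
Hypothesis hd : 1 < d.
Let p := pdelta d.
Let F := Fdelta d.

Lemma F_pos t : 0 < p -> 0 < t < 1 -> 0 < F t.
Proof. intros hp ht. unfold F, Fdelta. fold p. pose proof (p_lt_d d hd).
  pose proof (Rpower_exp_lt t p d ht H). lra. Qed.

Definition Fd t := p * Rpower t (p - 1) - d * Rpower t (d - 1).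

Lemma F_deriv t : 0 < t -> derivable_pt_lim F t (Fd t).
Proof. intros ht. unfold F, Fdelta, Fd. apply derivable_pt_lim_minus; apply derivable_pt_lim_power; auto. Qed.

Lemma F_cont t : 0 < t -> continuity_pt F t.
Proof. intros ht. apply derivable_continuous_pt. exists (Fd t). apply F_deriv; auto. Qed.

Lemma F_small : 0 < p -> forall eps, 0 < eps -> exists eta, 0 < eta /\ forall t, 0 < t < eta -> F t < eps.
Proof. intros hp eps he. exists (Rpower eps (/ p)). split. apply Rpower_pos.
  intros t ht. unfold F, Fdelta. fold p. pose proof (Rpower_pos t d).
  assert (Rpower t p < eps).
  { replace eps with (Rpower (Rpower eps (/ p)) p).
    apply Rpower_base_lt; lra.
    rewrite Rpower_mult. replace (/ p * p) with 1 by (field; lra). apply Rpower_1; auto. }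
  lra. Qed.

Lemma F_decr x y : p < 0 -> 0 < x -> x < y -> F y < F x.
Proof. intros hp h1 h2. unfold F, Fdelta. fold p.
  pose proof (Rpower_base_lt_neg x y p h1 h2 hp). pose proof (Rpower_base_lt x y d h1 h2 ltac:(lra)). lra. Qed.

Lemma F_large K : p < 0 -> exists t, 0 < t < 1 /\ K < F t.
Proof. intros hp. set (L := ln (Rabs K + 2) / p).
  assert (hl : 0 < ln (Rabs K + 2)) by (rewrite <- ln_1; apply ln_increasing; pose proof (Rabs_pos K); lra).
  assert (hL : L < 0). { unfold L, Rdiv. assert (/ p < 0) by (apply Rinv_lt_0_compat; auto). nra. }
  exists (exp L). split. split. apply exp_pos. rewrite <- exp_0. apply exp_increasing; auto.
  unfold F, Fdelta. fold p. unfold Rpower at 1 2. rewrite ln_exp.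
  replace (p * L) with (ln (Rabs K + 2)) by (unfold L; field; lra).
  rewrite exp_ln by (pose proof (Rabs_pos K); lra).
  assert (exp (d * L) < 1) by (rewrite <- exp_0; apply exp_increasing; nra).
  pose proof (Rle_abs K). lra. Qed.

Definition tc := Rpower (p / d) (/ (d - p)).

Lemma tc_bounds : 0 < p -> 0 < tc < 1.
Proof. intros hp. pose proof (p_lt_d d hd). fold p in H. split. apply Rpower_pos.
  unfold tc, Rpower. rewrite <- exp_0. apply exp_increasing.
  assert (ln (p/d) < 0). { apply ln_neg. split. apply Rdiv_lt_0_compat; lra.
     apply Rmult_lt_reg_r with d; [lra|]. unfold Rdiv; rewrite Rmult_assoc, Rinv_l; lra. }
  assert (0 < / (d - p)) by (apply Rinv_0_lt_compat; lra). nra. Qed.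

Lemma tc_pow : 0 < p -> Rpower tc (d - p) = p / d.
Proof. intros hp. pose proof (p_lt_d d hd). fold p in H. unfold tc. rewrite Rpower_mult.
  replace (/ (d - p) * (d - p)) with 1 by (field; lra). apply Rpower_1. apply Rdiv_lt_0_compat; lra. Qed.

Lemma Fd_eq t : Fd t = Rpower t (p - 1) * (p - d * Rpower t (d - p)).
Proof. unfold Fd. replace (Rpower t (d - 1)) with (Rpower t (p - 1) * Rpower t (d - p)).
  ring. rewrite <- Rpower_plus. f_equal; ring. Qed.

Lemma Fd_pos t : 0 < p -> 0 < t -> t < tc -> 0 < Fd t.
Proof. intros hp ht htc. pose proof (p_lt_d d hd). fold p in H. rewrite Fd_eq.
  apply Rmult_lt_0_compat. apply Rpower_pos.
  pose proof (Rpower_base_lt t tc (d - p) ht htc ltac:(lra)). rewrite tc_pow in H0 by auto.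
  apply Rmult_lt_compat_l with (r := d) in H0; [|lra]. unfold Rdiv in H0.
  replace (d * (p * / d)) with p in H0 by (field; lra). lra. Qed.

Lemma Fd_neg t : 0 < p -> tc < t -> Fd t < 0.
Proof. intros hp htc. pose proof (p_lt_d d hd). fold p in H. pose proof (tc_bounds hp). rewrite Fd_eq.
  rewrite <- (Rmult_0_r (Rpower t (p - 1))).
  apply Rmult_lt_compat_l. apply Rpower_pos.
  pose proof (Rpower_base_lt tc t (d - p) ltac:(lra) htc ltac:(lra)). rewrite tc_pow in H1 by auto.
  apply Rmult_lt_compat_l with (r := d) in H1; [|lra]. unfold Rdiv in H1.
  replace (d * (p * / d)) with p in H1 by (field; lra). lra. Qed.

Lemma F_incr x y : 0 < p -> 0 < x -> x < y -> y <= tc -> F x < F y.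
Proof. intros hp hx hxy hy.
  destruct (MVT_cor2 F Fd x y hxy) as [c [e hc]].
  { intros c hc. apply F_deriv; lra. }
  pose proof (Fd_pos c hp ltac:(lra) ltac:(lra)). nra. Qed.

Lemma F_decr2 x y : 0 < p -> tc <= x -> x < y -> F y < F x.
Proof. intros hp hx hxy. pose proof (tc_bounds hp).
  destruct (MVT_cor2 F Fd x y hxy) as [c [e hc]].
  { intros c hc. apply F_deriv; lra. }
  pose proof (Fd_neg c hp ltac:(lra)). nra. Qed.

Lemma F_max_tc t : 0 < p -> 0 < t -> F t <= F tc.
Proof. intros hp ht. pose proof (tc_bounds hp).
  destruct (Rtotal_order t tc) as [h|[h|h]].
  - left; apply F_incr; auto; lra.
  - subst; lra.
  - left; apply F_decr2; auto; lra. Qed.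

End F.

Lemma conv_gen d gam : 0 < gam ->
  (forall eps, 0 < eps -> exists eta, 0 < eta /\ forall t, 0 < t < eta -> Fdelta d t < eps) ->
  slices_converge_3pi2 (gfun d gam 1).
Proof.
  intros hg hF eps he. pose proof PI_RGT_0.
  set (e := Rmin eps (PI/4)).
  assert (e1 : e <= eps) by apply Rmin_l. assert (e2 : e <= PI/4) by apply Rmin_r.
  assert (e0 : 0 < e) by (apply Rmin_pos; lra).
  assert (hm : -1 < sin (-(PI/2) + e)).
  { replace (-1) with (sin (-(PI/2))) by (rewrite sin_neg, sin_PI2; ring). apply sin_increasing_1; lra. }
  destruct (hF (gam * (1 + sin (-(PI/2) + e)))) as [eta [heta hh]].
  { apply Rmult_lt_0_compat; lra. }
  exists (Rmin eta 1). split. apply Rmin_pos; lra.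
  intros tau s ht hs. pose proof (Rmin_l eta 1). pose proof (Rmin_r eta 1).
  apply slice_iff in hs; [|lra|lra].
  specialize (hh tau ltac:(lra)).
  destruct hs as [hr hsin].
  assert (hc : Fdelta d tau / gam < 1 + sin (-(PI/2) + e)).
  { apply div_lt_iff; auto. lra. }
  pose proof (asin_bound (sin s)). pose proof (sin_asin (sin s) (SIN_bound s)).
  set (a := asin (sin s)) in *.
  assert (ha : a < -(PI/2) + e).
  { destruct (Rlt_le_dec a (-(PI/2) + e)) as [|h]; auto. exfalso.
    destruct h as [h|h].
    - pose proof (sin_increasing_1 (-(PI/2) + e) a ltac:(lra) ltac:(lra) ltac:(lra) ltac:(lra) h). lra.
    - rewrite <- h in H3. lra. }
  destruct (sin_cases s hr) as [E|[E|E]]; fold a in E.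
  - lra.
  - apply Rabs_def1; lra.
  - apply Rabs_def1; lra.
Qed.

Lemma contF d c t : 0 < t -> continuity_pt (fun x => Fdelta d x - c) t.
Proof. intros ht. apply continuity_pt_minus; [apply F_cont; auto | apply continuity_pt_const; intros x y; reflexivity]. Qed.
Lemma contF' d c t : 0 < t -> continuity_pt (fun x => c - Fdelta d x) t.
Proof. intros ht. apply continuity_pt_minus; [apply continuity_pt_const; intros x y; reflexivity | apply F_cont; auto]. Qed.

Theorem mainTheorem4 (d gam : R) (hgam : 0 < gam) (hd : 1 < d) :
  let g := gfun d gam 1 in
  (* (a) *)
  (d < Phi -> forall M, is_max_F d M -> M / 2 < gam ->
     (forall tau, 0 < tau < 1 -> has_two (slice g tau)) /\
     is_single (slice g 1) (3 * PI / 2) /\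
     slices_converge_3pi2 g) /\
  (* (b) *)
  (d < Phi -> forall M, is_max_F d M -> gam < M / 2 ->
     exists a b, 0 < a /\ a < b /\ b < 1 /\
     (forall tau, (0 < tau < a \/ b < tau < 1) -> has_two (slice g tau)) /\
     is_single (slice g a) (PI / 2) /\
     is_single (slice g b) (PI / 2) /\
     (forall tau, a < tau < b -> is_empty (slice g tau)) /\
     is_single (slice g 1) (3 * PI / 2) /\
     subcritical g a (PI / 2) /\
     supercritical g b (PI / 2) /\
     slices_converge_3pi2 g) /\
  (* (c) *)
  (Phi < d ->
     exists tau0, 0 < tau0 < 1 /\
     (forall tau, 0 < tau < tau0 -> is_empty (slice g tau)) /\
     is_single (slice g tau0) (PI / 2) /\
     (forall tau, tau0 < tau < 1 -> has_two (slice g tau)) /\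
     is_single (slice g 1) (3 * PI / 2) /\
     supercritical g tau0 (PI / 2) /\
     fold_point g 1 (3 * PI / 2)).
Proof.
  intros g. pose proof (F1 d) as hF1. split; [|split].
  - intros hPhi M [[ts [hts hFts]] hM] hgM. pose proof (p_pos d hd hPhi) as hp.
    split; [|split].
    + intros tau ht. apply slice_two; auto; try lra. split.
      apply F_pos; auto. pose proof (hM tau ltac:(lra)). lra.
    + apply slice_one; auto.
    + apply conv_gen; auto. apply F_small; auto.
  - intros hPhi M [[ts [hts hFts]] hM] hgM. pose proof (p_pos d hd hPhi) as hp.
    pose proof (tc_bounds d hd hp) as htc. set (c := tc d) in *.
    pose proof (F_max_tc d hd ts hp ltac:(lra)) as hmax. fold c in hmax.
    destruct (F_small d hp (2 * gam) ltac:(lra)) as [eta [heta hsm]].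
    set (t1 := Rmin (eta/2) (c/2)).
    assert (t1a : t1 <= eta/2) by apply Rmin_l. assert (t1b : t1 <= c/2) by apply Rmin_r.
    assert (t1p : 0 < t1) by (apply Rmin_pos; lra).
    destruct (Ranalysis5.IVT_interv (fun x => Fdelta d x - 2 * gam) t1 c) as [a [ha hFa]].
    { intros x hx. apply contF; lra. } lra.
    { specialize (hsm t1 ltac:(lra)). lra. } { lra. }
    assert (hFa' : Fdelta d a = 2 * gam) by lra. clear hFa.
    assert (a <> c) by (intro e; rewrite e in hFa'; lra).
    destruct (Ranalysis5.IVT_interv (fun x => 2 * gam - Fdelta d x) c 1) as [b [hb hFb]].
    { intros x hx. apply contF'; lra. } lra. { lra. } { rewrite hF1; lra. }
    assert (hFb' : Fdelta d b = 2 * gam) by lra. clear hFb.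
    assert (b <> c) by (intro e; rewrite e in hFb'; lra).
    assert (b <> 1) by (intro e; rewrite e in hFb'; lra).
    assert (hmid : forall tau, a < tau < b -> 2 * gam < Fdelta d tau).
    { intros tau ht. destruct (Rle_lt_dec tau c).
      - rewrite <- hFa'. apply F_incr; auto; fold c; lra.
      - rewrite <- hFb'. apply F_decr2; auto; fold c; lra. }
    exists a, b. split; [lra|]. split; [lra|]. split; [lra|].
    split; [|split; [|split; [|split; [|split; [|split; [|split]]]]]].
    + intros tau [ht|ht]; apply slice_two; auto; try lra; split.
      * apply F_pos; auto; lra.
      * rewrite <- hFa'. apply F_incr; auto; fold c; lra.
      * apply F_pos; auto; lra.
      * rewrite <- hFb'. apply F_decr2; auto; fold c; lra.
    + apply slice_top; auto; lra.
    + apply slice_top; auto; lra.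
    + intros tau ht. apply slice_empty; auto; try lra.
    + apply slice_one; auto.
    + apply (sub_gen d gam hgam a (Rmin a (b - a))); auto; try lra.
      * apply Rmin_pos; lra.
      * intros tau ht. pose proof (Rmin_l a (b - a)). rewrite <- hFa'. apply F_incr; auto; fold c; lra.
      * intros tau ht. pose proof (Rmin_r a (b - a)). apply hmid; lra.
      * apply F_cont; lra.
    + apply (super_gen d gam hgam b (Rmin (1 - b) (b - a))); auto; try lra.
      * apply Rmin_pos; lra.
      * intros tau ht. pose proof (Rmin_l (1 - b) (b - a)). rewrite <- hFb'. apply F_decr2; auto; fold c; lra.
      * intros tau ht. pose proof (Rmin_r (1 - b) (b - a)). apply hmid; lra.
      * apply F_cont; lra.
    + apply conv_gen; auto. apply F_small; auto.
  - intros hPhi. pose proof (p_neg d hd hPhi) as hp.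
    destruct (F_large d hd (2 * gam) hp) as [t1 [ht1 hFt1]].
    destruct (Ranalysis5.IVT_interv (fun x => 2 * gam - Fdelta d x) t1 1) as [t0 [ht0 hF0]].
    { intros x hx. apply contF'; lra. } lra. { lra. } { rewrite hF1; lra. }
    assert (hF0' : Fdelta d t0 = 2 * gam) by lra. clear hF0.
    assert (t0 <> t1) by (intro e; rewrite e in hF0'; lra).
    assert (t0 <> 1) by (intro e; rewrite e in hF0'; lra).
    exists t0. split; [lra|]. split; [|split; [|split; [|split; [|split]]]].
    + intros tau ht. apply slice_empty; auto; try lra. rewrite <- hF0'. apply F_decr; auto; lra.
    + apply slice_top; auto; lra.
    + intros tau ht. apply slice_two; auto; try lra. split.
      * rewrite <- hF1. apply F_decr; auto; lra.
      * rewrite <- hF0'. apply F_decr; auto; lra.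
    + apply slice_one; auto.
    + apply (super_gen d gam hgam t0 (Rmin t0 (1 - t0))); auto; try lra.
      * apply Rmin_pos; lra.
      * intros tau ht. rewrite <- hF0'. apply F_decr; auto; lra.
      * intros tau ht. pose proof (Rmin_l t0 (1 - t0)). rewrite <- hF0'. apply F_decr; auto; lra.
      * apply F_cont; lra.
    + apply fold_gen; auto; try lra.
      * apply (slice_one d gam hgam). reflexivity.
      * replace (3 * PI / 2) with (3 * (PI / 2)) by field. apply cos_3PI2.
Qed.
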